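(* Let $\xi\in C^2(\mathbb S^1;\mathbb R^d)$ and $\sigma\in C^1(\mathbb S^1;\mathbb R)$ satisfy $$\partial_s(\sigma\partial_s\xi)+\xi=0,\qquad |\partial_s\xi|=1\ \text{on }\mathbb S^1.$$ Then $\xi$ is a plane curve (its image lies in a two-dimensional plane) whose curvature $k$, defined by $\partial_{ss}\xi=kN$ with $N$ the unit inner normal, satisfies $k(s)>0$ for all $s\in\mathbb S^1$.
   Context: $\mathbb S^1=\mathbb R/\mathbb Z$, $d\ge2$. *)

(* Defs.v *)
From HB Require Import structures.
From mathcomp Require Import all_boot all_order all_algebra.
From mathcomp Require Import all_classical all_reals all_analysis.
Set Implicit Arguments. Unset Strict Implicit. Unset Printing Implicit Defensive.
Import Order.TTheory GRing.Theory Num.Theory.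
Import numFieldNormedType.Exports.
Local Open Scope ring_scope.

Definition dotv (R : realType) (d : nat) (u v : 'rV[R]_d) : R :=
  \sum_(i < d) u ord0 i * v ord0 i.

Definition enorm (R : realType) (d : nat) (u : 'rV[R]_d) : R :=
  Num.sqrt (dotv u u).

(* Functions on S^1 = R/Z are 1-periodic functions on R. *)
Definition periodic1 (R : realType) (T : Type) (f : R -> T) : Prop :=
  forall s : R, f (s + 1) = f s.

(* In the oriented plane with orthonormal basis (e1, e2), the normal to a
   tangent vector T obtained by rotating T by +pi/2 :
   T = a e1 + b e2  |->  a e2 - b e1. *)
Definition plane_normal (R : realType) (d : nat) (e1 e2 T : 'rV[R]_d) : 'rV[R]_d :=
  dotv T e1 *: e2 - dotv T e2 *: e1.

(* Main.v *)
Require Import Defs.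
From HB Require Import structures.
From mathcomp Require Import all_boot all_order all_algebra.
From mathcomp Require Import all_classical all_reals all_analysis.
From mathcomp Require Import ring lra.
Import Order.TTheory GRing.Theory Num.Theory.
Import numFieldNormedType.Exports.
Local Open Scope ring_scope.

Section H.
Context {R : realType} {d : nat}.
Implicit Types u v w : 'rV[R]_d.

Lemma dotvC u v : dotv u v = dotv v u.
Proof. by rewrite /dotv; apply: eq_bigr => i _; rewrite mulrC. Qed.

Lemma dotvDr u v w : dotv u (v + w) = dotv u v + dotv u w.
Proof. by rewrite /dotv -big_split; apply: eq_bigr => i _; rewrite mxE mulrDr. Qed.

Lemma dotvZr a u v : dotv u (a *: v) = a * dotv u v.
Proof.
by rewrite /dotv mulr_sumr; apply: eq_bigr => i _; rewrite mxE mulrCA.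
Qed.

Lemma dotvNr u v : dotv u (- v) = - dotv u v.
Proof. by rewrite -scaleN1r dotvZr mulN1r. Qed.

Lemma dotvBr u v w : dotv u (v - w) = dotv u v - dotv u w.
Proof. by rewrite dotvDr dotvNr. Qed.

Lemma dotvDl u v w : dotv (v + w) u = dotv v u + dotv w u.
Proof. by rewrite dotvC dotvDr !(dotvC u). Qed.

Lemma dotvZl a u v : dotv (a *: v) u = a * dotv v u.
Proof. by rewrite dotvC dotvZr dotvC. Qed.

Lemma dotvNl u v : dotv (- v) u = - dotv v u.
Proof. by rewrite dotvC dotvNr dotvC. Qed.

Lemma dotvBl u v w : dotv (v - w) u = dotv v u - dotv w u.
Proof. by rewrite dotvDl dotvNl. Qed.

Lemma dotv0r u : dotv u 0 = 0.
Proof. by rewrite /dotv big1 // => i _; rewrite mxE mulr0. Qed.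

Lemma dotv_ge0 u : 0 <= dotv u u.
Proof. by rewrite /dotv sumr_ge0 // => i _; rewrite -expr2 sqr_ge0. Qed.

Lemma dotv_eq0 u : dotv u u = 0 -> u = 0.
Proof.
move=> /eqP; rewrite /dotv psumr_eq0; last by move=> i _; rewrite -expr2 sqr_ge0.
move=> /allP H; apply/matrixP => i j; rewrite (ord1 i) mxE.
by have /(_ (mem_index_enum j)) := H j; rewrite -expr2 sqrf_eq0 => /eqP.
Qed.

Lemma enorm1 u : enorm u = 1 -> dotv u u = 1.
Proof.
by move=> h; rewrite -(sqr_sqrtr (dotv_ge0 u)) -/(enorm u) h expr1n.
Qed.

Lemma span2 e1 e2 u : dotv e1 e1 = 1 -> dotv e2 e2 = 1 -> dotv e1 e2 = 0 ->
  (forall w, dotv e1 w = 0 -> dotv e2 w = 0 -> dotv u w = 0) ->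
  u = dotv u e1 *: e1 + dotv u e2 *: e2.
Proof.
move=> h11 h22 h12 H.
set w := u - dotv u e1 *: e1 - dotv u e2 *: e2.
have w1 : dotv e1 w = 0.
  by rewrite /w !dotvBr !dotvZr h11 (dotvC e1 u) h12; ring.
have w2 : dotv e2 w = 0.
  by rewrite /w !dotvBr !dotvZr h22 (dotvC e2 u) (dotvC e2 e1) h12; ring.
have ww : dotv w w = 0.
  by rewrite {1}/w !dotvBl !dotvZl H // w1 w2; ring.
have w0 : w = 0 by apply: dotv_eq0.
move: w0; rewrite /w => /eqP; rewrite subr_eq0 subr_eq => /eqP hu.
by rewrite {1}hu addrC.
Qed.

Lemma is_derive_coord {F : R -> 'rV[R]_d} {s dF} i :
  is_derive s (1:R) F dF -> is_derive s (1:R) (fun t => F t ord0 i) (dF ord0 i).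
Proof.
move=> [dv <-]; apply: DeriveDef; first exact: (proj1 (derivable_mxP F s 1) dv).
by rewrite derive_mx // mxE.
Qed.

Lemma is_derive_dot {F G : R -> 'rV[R]_d} {s dF dG} :
  is_derive s (1:R) F dF -> is_derive s (1:R) G dG ->
  is_derive s (1:R) (fun t => dotv (F t) (G t)) (dotv dF (G s) + dotv (F s) dG).
Proof.
move=> hF hG.
have -> : (fun t => dotv (F t) (G t)) =
   \sum_(i < d) ((fun t => F t ord0 i) * (fun t => G t ord0 i)).
  by apply/funext => t; rewrite /dotv fct_sumE.
apply: is_derive_eq.
  apply: is_derive_sum => i; apply: is_deriveM; exact: is_derive_coord.
rewrite /dotv -big_split /=; apply: eq_bigr => i _.
by rewrite /GRing.scale /= addrC [G s _ _ * _]mulrC.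
Qed.

Lemma is_deriveZfun {f : R -> R} {F : R -> 'rV[R]_d} {s df dF} :
  is_derive s (1:R) f df -> is_derive s (1:R) F dF ->
  is_derive s (1:R) (fun t => f t *: F t) (df *: F s + f s *: dF).
Proof.
move=> hf hF.
have hc : forall i j, is_derive s (1:R) (fun t => (f t *: F t) i j)
                         (df * F s i j + f s * dF i j).
  move=> i j; rewrite (ord1 i).
  have -> : (fun t => (f t *: F t) ord0 j) = f * (fun t => F t ord0 j).
    by apply/funext => t; rewrite mxE.
  apply: is_derive_eq; first by apply: is_deriveM => //; exact: is_derive_coord.
  by rewrite /GRing.scale /= addrC mulrC.
have dv : derivable (fun t => f t *: F t) s 1.
  by apply/derivable_mxP => i j; have [] := hc i j.
apply: DeriveDef => //; rewrite derive_mx //; apply/matrixP => i j.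
rewrite !mxE; exact: derive_val.
Qed.


Lemma alg2 (sg a1 a2 b1 b2 aw bw c : R) : 0 < c ->
  sg * b2 * a1 - sg * b1 * a2 = c ->
  sg * bw * a1 - sg * b1 * aw = 0 -> sg * bw * a2 - sg * b2 * aw = 0 ->
  aw = 0 /\ bw = 0.
Proof.
move=> c0 hc hX hY; have cn0 : c != 0 by rewrite gt_eqF.
have ha : aw * c = a2 * (sg * bw * a1 - sg * b1 * aw) - a1 * (sg * bw * a2 - sg * b2 * aw).
  by rewrite -hc; ring.
have hb : bw * c = b2 * (sg * bw * a1 - sg * b1 * aw) - b1 * (sg * bw * a2 - sg * b2 * aw).
  by rewrite -hc; ring.
rewrite hX hY !mulr0 subr0 in ha hb.
by split; apply/eqP; rewrite -(mulIr_eq0 _ (mulIf cn0)) ?ha ?hb.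
Qed.

Lemma final_step (sg sg' : R -> R) (xi T A : R -> 'rV[R]_d) (e1 e2 : 'rV[R]_d) (c : R) :
  dotv e1 e1 = 1 -> dotv e2 e2 = 1 -> dotv e1 e2 = 0 -> 0 < c ->
  (forall s, sg s * dotv (T s) e2 * dotv (xi s) e1
             - sg s * dotv (T s) e1 * dotv (xi s) e2 = c) ->
  (forall w, dotv e1 w = 0 -> dotv e2 w = 0 -> forall s,
      sg s * dotv (T s) w * dotv (xi s) e1 - sg s * dotv (T s) e1 * dotv (xi s) w = 0
   /\ sg s * dotv (T s) w * dotv (xi s) e2 - sg s * dotv (T s) e2 * dotv (xi s) w = 0) ->
  (forall w s, (forall t, dotv (T t) w = 0) -> dotv (A s) w = 0) ->
  (forall s, sg' s *: T s + sg s *: A s = - xi s) ->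
  (forall s, dotv (T s) (T s) = 1) ->
  (forall s, dotv (T s) (A s) = 0) ->
  exists (p e1 e2 : 'rV[R]_d),
    [/\ dotv e1 e1 = 1, dotv e2 e2 = 1, dotv e1 e2 = 0,
        (forall s, exists a b : R, xi s = p + a *: e1 + b *: e2) &
        (forall s, exists k : R,
            0 < k /\ A s = k *: plane_normal e1 e2 (T s))].
Proof.
move=> h11 h22 h12 c0 hc hw hAw F4 TT TA.
have perp w : dotv e1 w = 0 -> dotv e2 w = 0 -> forall s,
    dotv (xi s) w = 0 /\ dotv (T s) w = 0.
  move=> w1 w2 s; have [X Y] := hw w w1 w2 s.
  exact: alg2 (hc s) X Y.
have Hxi s : xi s = dotv (xi s) e1 *: e1 + dotv (xi s) e2 *: e2.
  by apply: span2 => // w w1 w2; have [] := perp w w1 w2 s.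
have HT s : T s = dotv (T s) e1 *: e1 + dotv (T s) e2 *: e2.
  by apply: span2 => // w w1 w2; have [] := perp w w1 w2 s.
have HA s : A s = dotv (A s) e1 *: e1 + dotv (A s) e2 *: e2.
  apply: span2 => // w w1 w2; apply: hAw => t.
  by have [] := perp w w1 w2 t.
exists 0, e1, e2; split => // s.
  by exists (dotv (xi s) e1), (dotv (xi s) e2); rewrite add0r -Hxi.
set b1 := dotv (T s) e1; set b2 := dotv (T s) e2.
set p := dotv (A s) e1; set q := dotv (A s) e2.
set a1 := dotv (xi s) e1; set a2 := dotv (xi s) e2.
have hb : b1 * b1 + b2 * b2 = 1.
  by have := TT s; rewrite {2}HT dotvDr !dotvZr.
have hpq : b1 * p + b2 * q = 0.
  by have := TA s; rewrite HA dotvDr !dotvZr -/b1 -/b2 mulrC [q * _]mulrC.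
set k := b1 * q - b2 * p.
have hN : plane_normal e1 e2 (T s) = b1 *: e2 - b2 *: e1 by [].
have hk : sg s * k = b2 * a1 - b1 * a2.
  have := congr1 (fun v => dotv v (plane_normal e1 e2 (T s))) (F4 s) => /=.
  rewrite hN dotvDl !dotvZl dotvNl !dotvBr !dotvZr -/b1 -/b2 -/p -/q -/a1 -/a2.
  move=> h; rewrite /k; lra.
have hsD := hc s; rewrite -/b1 -/b2 -/a1 -/a2 in hsD.
exists k; split.
  have h2 : sg s * sg s * k = c by rewrite -mulrA hk -hsD; ring.
  nra.
have hp : p = - (k * b2).
  have : p + k * b2 = b1 * (b1 * p + b2 * q) + p * (1 - (b1 * b1 + b2 * b2)).
    by rewrite /k; ring.
  by rewrite hpq hb subrr !mulr0 addr0 => /eqP; rewrite addr_eq0 => /eqP.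
have hq : q = k * b1.
  have : q - k * b1 = b2 * (b1 * p + b2 * q) + q * (1 - (b1 * b1 + b2 * b2)).
    by rewrite /k; ring.
  by rewrite hpq hb subrr !mulr0 addr0 => /eqP; rewrite subr_eq0 => /eqP.
rewrite hN scalerBr !scalerA {1}HA -/p -/q hp hq scaleNr addrC.
by rewrite [k * b2]mulrC [k * b1]mulrC.
Qed.

End H.

Theorem proposition3p8 (R : realType) (d : nat) (hd : (2 <= d)%N)
  (xi : R -> 'rV[R]_d) (sigma : R -> R)
  (* xi in C^2(S^1; R^d) *)
  (xi_per : periodic1 xi)
  (xi_d1 : forall s, derivable xi s 1)
  (xi_d2 : forall s, derivable (derive1 xi) s 1)
  (xi_c2 : continuous (derive1 (derive1 xi)))
  (* sigma in C^1(S^1; R) *)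
  (sigma_per : periodic1 sigma)
  (sigma_d1 : forall s, derivable sigma s 1)
  (sigma_c1 : continuous (derive1 sigma))
  (* d/ds (sigma d/ds xi) + xi = 0 and |d/ds xi| = 1 *)
  (heq : forall s, derive1 (fun t => sigma t *: derive1 xi t) s + xi s = 0)
  (hunit : forall s, enorm (derive1 xi s) = 1) :
  exists (p e1 e2 : 'rV[R]_d),
    [/\ dotv e1 e1 = 1, dotv e2 e2 = 1, dotv e1 e2 = 0,
        (forall s, exists a b : R, xi s = p + a *: e1 + b *: e2) &
        (forall s, exists k : R,
            0 < k /\ derive1 (derive1 xi) s = k *: plane_normal e1 e2 (derive1 xi s))].
Proof.
set T := derive1 xi; set A := derive1 T.
have hT s : is_derive s (1:R) xi (T s).
  by have := derivableP (xi_d1 s); rewrite -derive1E.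
have hA s : is_derive s (1:R) T (A s).
  by have := derivableP (xi_d2 s); rewrite -derive1E.
have hS s : is_derive s (1:R) sigma (derive1 sigma s).
  by have := derivableP (sigma_d1 s); rewrite -derive1E.
set sg' := derive1 sigma.
have F4 s : sg' s *: T s + sigma s *: A s = - xi s.
  have hZ := is_deriveZfun (hS s) (hA s).
  have := heq s; rewrite derive1E derive_val.
  by move=> /eqP; rewrite addr_eq0 => /eqP.
have TT s : dotv (T s) (T s) = 1 by apply: enorm1; exact: hunit.
have TA s : dotv (T s) (A s) = 0.
  have h := is_derive_dot (hA s) (hA s).
  have e : (fun t => dotv (T t) (T t)) = cst 1 by apply/funext => t; rewrite TT.
  rewrite e in h; have := @derive_val _ _ _ _ _ _ _ h; rewrite derive_cst (dotvC (A s)) => h'.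
  lra.
pose g (w : 'rV[R]_d) := fun t => sigma t * dotv (T t) w.
pose f (v : 'rV[R]_d) := fun t => dotv (xi t) v.
have hg w x : is_derive x (1:R) (g w) (- dotv (xi x) w).
  have -> : g w = sigma * (fun t => dotv (T t) (cst w t)) by [].
  apply: is_derive_eq; first exact: is_deriveM (hS x) (is_derive_dot (hA x) (is_derive_cst w x 1)).
  have := congr1 (fun v => dotv v w) (F4 x) => /=.
  rewrite dotvDl !dotvZl dotvNl dotv0r addr0 /GRing.scale /= => <-.
  by rewrite addrC mulrC.
have hf v x : is_derive x (1:R) (f v) (dotv (T x) v).
  apply: is_derive_eq; first exact: is_derive_dot (hT x) (is_derive_cst v x 1).
  by rewrite dotv0r addr0.
have Qc v w s s0 :
  sigma s * dotv (T s) w * dotv (xi s) v - sigma s * dotv (T s) v * dotv (xi s) w =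
  sigma s0 * dotv (T s0) w * dotv (xi s0) v - sigma s0 * dotv (T s0) v * dotv (xi s0) w.
  have := @is_derive_0_is_cst _ (g w * f v - g v * f w) s s0.
  apply => x; apply: is_derive_eq.
  rewrite /g /f /GRing.scale /=; ring.
pose phi := fun t => dotv (xi t) (xi t).
have hphi t : is_derive t (1:R) phi (dotv (T t) (xi t) + dotv (xi t) (T t)).
  exact: is_derive_dot (hT t) (hT t).
have cphi : ({within `[0, 2], continuous phi})%classic.
  by apply: derivable_within_continuous => t _; have [] := hphi t.
have le02 : (0:R) <= 2 by lra.
have [c cI cmax] := EVT_max le02 cphi.
have [m mI hm] : exists2 m, m \in `]0, 2[%R & phi m = phi c.
  case: (eqVneq c 0) => [->|c0].
    exists 1; first by rewrite in_itv /=; apply/andP; split; lra.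
    by have := xi_per 0; rewrite add0r /phi => ->.
  case: (eqVneq c 2) => [->|c2].
    exists 1; first by rewrite in_itv /=; apply/andP; split; lra.
    have e : (1 + 1 : R) = 2 by lra.
    by have := xi_per 1; rewrite e /phi => ->.
  exists c => //.
  rewrite in_itv /= !lt_neqAle eq_sym c0 c2 /=; rewrite in_itv /= in cI; exact: cI.
have mmax t : t \in `]0, 2[%R -> phi t <= phi m.
  rewrite hm => tI; apply: cmax; move: tI; rewrite !in_itv /= => /andP [h1 h2].
  by apply/andP; split; lra.
have dm : is_derive m (1:R) phi 0.
  apply: (derive1_at_max le02 _ mI mmax) => t _; by have [] := hphi t.
have hperp : dotv (xi m) (T m) = 0.
  have e1 := @derive_val _ _ _ _ _ _ _ dm.
  have e2 := @derive_val _ _ _ _ _ _ _ (hphi m).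
  rewrite e1 (dotvC (T m)) in e2; lra.
have xim : dotv (xi m) (xi m) != 0.
  apply/eqP => h0.
  have nr : \forall t \near m, cst (0 : 'rV[R]_d) t = xi t.
    move: (near_in_itvoo mI); apply: filterS => t tI /=.
    symmetry; apply: dotv_eq0; apply/eqP; rewrite eq_le dotv_ge0 andbT.
    by have := mmax t tI; rewrite /phi h0.
  have h := near_eq_is_derive nr (is_derive_cst 0 m 1).
  have e1 := @derive_val _ _ _ _ _ _ _ h.
  have e2 := @derive_val _ _ _ _ _ _ _ (hT m).
  rewrite e1 in e2; have := TT m; rewrite -e2 dotv0r => /eqP.
  by rewrite eq_sym oner_eq0.
have sm : sigma m != 0.
  apply/eqP => s0; have := congr1 (fun v => dotv v (xi m)) (F4 m) => /=.
  rewrite dotvDl !dotvZl dotvNl s0 mul0r addr0 (dotvC (T m)) hperp mulr0.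
  by move=> /eqP; rewrite eq_sym oppr_eq0 (negbTE xim).
have [eps [heps hpos]] : exists eps : R, eps * eps = 1 /\ 0 < eps * sigma m.
  case: (ltrgtP 0 (sigma m)) => h.
  - by exists 1; rewrite !mul1r.
  - by exists (-1); rewrite mulrNN mul1r mulN1r oppr_gt0.
  - by move: sm; rewrite -h eqxx.
pose P := dotv (xi m) (xi m).
have P0 : 0 < P by rewrite lt_neqAle eq_sym xim dotv_ge0.
pose n := Num.sqrt P.
have n0 : 0 < n by rewrite sqrtr_gt0.
have hn2 : n * n = P by rewrite -expr2 sqr_sqrtr // ltW.
have nn0 : n != 0 by rewrite gt_eqF.
pose e1 := (eps / n) *: xi m; pose e2 := T m.
have h11 : dotv e1 e1 = 1.
  rewrite /e1 dotvZl dotvZr -/P -hn2.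
  have -> : eps / n * (eps / n * (n * n)) = eps * eps by field.
  exact: heps.
have h22 : dotv e2 e2 = 1 by exact: TT.
have h12 : dotv e1 e2 = 0 by rewrite /e1 /e2 dotvZl hperp mulr0.
pose cc := sigma m * dotv (T m) e2 * dotv (xi m) e1 - sigma m * dotv (T m) e1 * dotv (xi m) e2.
have c0 : 0 < cc.
  rewrite /cc /e1 /e2 TT !dotvZr (dotvC (T m)) hperp -/P -hn2.
  have -> : sigma m * 1 * (eps / n * (n * n)) - sigma m * (eps / n * 0) * 0
            = (eps * sigma m) * n by field.
  exact: mulr_gt0.
have hen : eps / n != 0.
  rewrite mulf_eq0 invr_eq0 negb_or nn0 andbT.
  by apply/eqP => e0; move: heps; rewrite e0 mul0r => /eqP; rewrite eq_sym oner_eq0.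
apply: (@final_step R d sigma sg' xi T A e1 e2 cc h11 h22 h12 c0).
- by move=> s; rewrite (Qc e1 e2 s m).
- move=> w w1 w2 s.
  have xw : dotv (xi m) w = 0.
    by move: w1; rewrite /e1 dotvZl => /eqP; rewrite mulf_eq0 (negbTE hen) /= => /eqP.
  have tw : dotv (T m) w = 0 by exact: w2.
  by rewrite (Qc e1 w s m) (Qc e2 w s m) xw tw !mulr0 !mul0r subrr.
- move=> w s H.
  have h := is_derive_dot (hA s) (is_derive_cst w s 1).
  have e : (fun t => dotv (T t) (cst w t)) = cst 0 by apply/funext => t; exact: H.
  rewrite e in h; have := @derive_val _ _ _ _ _ _ _ h.
  by rewrite derive_cst dotv0r addr0 => <-.
- exact: F4.
- exact: TT.
- exact: TA.
Qed.
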